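(* Let $a\geq3$ be an odd integer and let $\alpha\in A_a\cup B_a$. (1) If $\alpha\in A_{a-2}$, then the sequence of compatible orbits $\{\mathscr{O}_n((0,0),\alpha)\}_{n=0}^\infty$, where $\mathscr{O}_n((0,0),\alpha)$ is the orbit of the prefractal billiard table $\Omega(S_{a,n})$ with initial condition $((0,0),\alpha)$, is a sequence of compatible periodic orbits. (2) If $\alpha\in B_a$, $n_0\in\mathbb{N}$ and $r<2a^{n_0}$ is an odd positive integer, then the sequence of compatible orbits $\{\mathscr{O}_n((\tfrac{r}{2a^{n_0}},0),\alpha)\}_{n=0}^\infty$ of the tables $\Omega(S_{a,n})$ with initial condition $((\tfrac{r}{2a^{n_0}},0),\alpha)$ is a sequence of compatible periodic orbits. Furthermore, in each case the sequence of compatible periodic orbits is eventually constant, and its trivial limit (the common path of the orbits from some index on) constitutes a periodic orbit of the self-similar Sierpinski carpet billiard table $\Omega(S_a)$.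
   Context: Let $Q=[0,1]^2$. For odd $a\geq3$: $S_{a,0}=Q$, and $S_{a,n}$ is obtained from $S_{a,n-1}$ (a union of closed squares of side $a^{-(n-1)}$) by dividing each such square into $a^2$ subsquares of side $a^{-n}$ and removing the open middle one; $S_a=\bigcap_n S_{a,n}$. A peripheral square is the boundary of a removed open square. $A_b=\{\tfrac pq: p+q\leq b,\ 0\leq p<q\leq b-1,\ p,q\in\mathbb{N}\cup\{0\},\ p+q \text{ odd}\}$ and $B_b=\{\tfrac pq: p+q\leq b-1,\ 0\leq p\leq q\leq b-2,\ p,q\in\mathbb{N},\ p,q\text{ odd}\}$ for odd $b\ge3$, with $A_1=\{0\}$. The prefractal billiard table $\Omega(S_{a,n})$ is the region $S_{a,n}$ with boundary $\partial S_{a,n}$ (the boundary of $Q$ together with the peripheral squares of side $\geq a^{-n}$); a billiard ball moves in straight lines and reflects off the boundary with angle of reflection equal to angle of incidence. At a corner of $Q$ reflection is well defined (the ball exits reflected through the angle bisector); if the ball hits a corner of a peripheral square, the trajectory terminates there (the orbit is singular). An initial condition $(x^0,\alpha)$ consists of a boundary point $x^0$ and an inward direction of slope $\alpha$ (i.e. $\alpha=\tan\theta^0$); its orbit is the sequence of successive collision points with their outgoing directions. An orbit is closed if it has finitely many elements, and periodic if it is nonsingular and there is a least $m\geq1$ with the $m$-th iterate of the billiard map equal to the initial condition. Initial conditions $(x_n^0,\alpha)$ for $\Omega(S_{a,n})$ and $(x_m^0,\alpha)$ for $\Omega(S_{a,m})$, $n>m$, with the same slope are compatible if $x_n^0,x_m^0$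 lie on a segment of direction $\alpha$ meeting $\partial S_{a,n}$ only at $x_n^0$; a sequence of orbits $\{\mathscr{O}_n\}_{n\geq N}$ of $\Omega(S_{a,n})$ with pairwise compatible initial conditions is a sequence of compatible orbits, and it is a sequence of compatible periodic orbits if every $\mathscr{O}_n$ is periodic. It is constant if the path traversed by $\mathscr{O}_{n+1}$ equals that traversed by $\mathscr{O}_n$ for all $n\geq N$, and eventually constant if this holds from some index on. A periodic orbit of $\Omega(S_a)$ is understood, in this paper, as the trivial limit (common path) of an eventually constant sequence of compatible periodic orbits. *)

(* Defs.v *)
From Stdlib Require Import Reals Lra Arith.
Open Scope R_scope.

Definition pt := (R * R)%type.
(* a billiard state: (collision point, outgoing direction vector) *)
Definition state := (pt * pt)%type.

(* the middle digit c = (a-1)/2 for odd a *)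
Definition mid (a : nat) : nat := Nat.div2 a.

Definition digit (a d i : nat) : nat := Nat.modulo (Nat.div i (a ^ d)) a.

(* the closed cell [i/a^m,(i+1)/a^m] x [j/a^m,(j+1)/a^m] (i,j < a^m) is part
   of S_{a,m}, i.e. none of its ancestors (nor itself) is a removed middle square *)
Definition retained (a m i j : nat) : Prop :=
  forall d, (d < m)%nat -> ~ (digit a d i = mid a /\ digit a d j = mid a).

(* peripheral square of level k (side a^-k) removed from the retained cell
   (i,j) of level k-1; it belongs to the boundary of S_{a,n} iff 1 <= k <= n *)
Definition periph (a n k i j : nat) : Prop :=
  (1 <= k)%nat /\ (k <= n)%nat /\ (i < a ^ (k - 1))%nat /\ (j < a ^ (k - 1))%nat
  /\ retained a (k - 1) i j.

Definition side (a k : nat) : R := / (INR a ^ k).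
Definition llx (a k i : nat) : R := INR (a * i + mid a) * side a k.

(* horizontal / vertical sides of Q and of peripheral squares of level <= n *)
Definition on_hwall (a n : nat) (p : pt) : Prop :=
  ((snd p = 0 \/ snd p = 1) /\ 0 <= fst p <= 1) \/
  (exists k i j, periph a n k i j /\
     (snd p = llx a k j \/ snd p = llx a k j + side a k) /\
     llx a k i <= fst p <= llx a k i + side a k).

Definition on_vwall (a n : nat) (p : pt) : Prop :=
  ((fst p = 0 \/ fst p = 1) /\ 0 <= snd p <= 1) \/
  (exists k i j, periph a n k i j /\
     (fst p = llx a k i \/ fst p = llx a k i + side a k) /\
     llx a k j <= snd p <= llx a k j + side a k).

Definition on_boundary (a n : nat) (p : pt) : Prop := on_hwall a n p \/ on_vwall a n p.

Definition pcorner (a n : nat) (p : pt) : Prop :=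
  exists k i j, periph a n k i j /\
    (fst p = llx a k i \/ fst p = llx a k i + side a k) /\
    (snd p = llx a k j \/ snd p = llx a k j + side a k).

Definition move (x v : pt) (t : R) : pt := (fst x + t * fst v, snd x + t * snd v).

(* transversal collisions with walls *)
Definition hhit (a n : nat) (v y : pt) : Prop := snd v <> 0 /\ on_hwall a n y.
Definition vhit (a n : nat) (v y : pt) : Prop := fst v <> 0 /\ on_vwall a n y.
Definition hits (a n : nat) (x v : pt) (t : R) : Prop :=
  hhit a n v (move x v t) \/ vhit a n v (move x v t).

(* One application of the billiard map of Omega(S_{a,n}): travel in a straight
   line to the first collision with the boundary; reflect (angle of incidence =
   angle of reflection; at a corner of Q both components flip, i.e. the ball
   comes back along its path); undefined (orbit terminates) at a corner of a
   peripheral square. *)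
Definition step (a n : nat) (s s' : state) : Prop :=
  let (x, v) := s in let (y, w) := s' in
  exists t, 0 < t /\ hits a n x v t /\
    (forall t', 0 < t' < t -> ~ hits a n x v t') /\
    y = move x v t /\ ~ pcorner a n y /\
    (vhit a n v y -> fst w = - fst v) /\ (~ vhit a n v y -> fst w = fst v) /\
    (hhit a n v y -> snd w = - snd v) /\ (~ hhit a n v y -> snd w = snd v).

Fixpoint reach (a n k : nat) (s s' : state) : Prop :=
  match k with
  | O => s' = s
  | S k' => exists s1, reach a n k' s s1 /\ step a n s1 s'
  end.

Definition nonsingular (a n : nat) (s : state) : Prop :=
  forall k, exists s', reach a n k s s'.

Definition periodic (a n : nat) (s : state) : Prop :=
  nonsingular a n s /\
  exists m, (1 <= m)%nat /\ reach a n m s s /\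
    (forall k, (1 <= k)%nat -> (k < m)%nat -> ~ reach a n k s s).

Definition segment (p q : pt) (z : pt) : Prop :=
  exists l, 0 <= l <= 1 /\ z = ((1 - l) * fst p + l * fst q, (1 - l) * snd p + l * snd q).

Definition path (a n : nat) (s : state) : pt -> Prop :=
  fun z => exists k s1 s2, reach a n k s s1 /\ step a n s1 s2 /\ segment (fst s1) (fst s2) z.

Definition compatible (a n : nat) (xn xm v : pt) : Prop :=
  exists t, xn = move xm v t /\
    (forall z, segment xm xn z -> on_boundary a n z -> z = xn).

(* a periodic orbit of Omega(S_a): the trivial limit (common path) of an
   eventually constant sequence of compatible periodic orbits *)
Definition carpet_periodic_orbit (a : nat) (P : pt -> Prop) : Prop :=
  exists (N : nat) (x : nat -> pt) (v : pt),
    v <> (0, 0) /\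
    (forall n, (N <= n)%nat -> on_boundary a n (x n)) /\
    (forall n m, (N <= m)%nat -> (m < n)%nat -> compatible a n (x n) (x m) v) /\
    (forall n, (N <= n)%nat -> periodic a n (x n, v)) /\
    exists M, (N <= M)%nat /\
      (forall n, (M <= n)%nat -> path a (S n) (x (S n), v) = path a n (x n, v)) /\
      P = path a M (x M, v).

Definition inA (b : nat) (al : R) : Prop :=
  if Nat.eqb b 1 then al = 0 else
  exists p q : nat, (p + q <= b)%nat /\ (p < q)%nat /\ (q <= b - 1)%nat /\
    Nat.odd (p + q) = true /\ al = INR p / INR q.

Definition inB (b : nat) (al : R) : Prop :=
  exists p q : nat, (1 <= p)%nat /\ (1 <= q)%nat /\ (p + q <= b - 1)%nat /\
    (p <= q)%nat /\ (q <= b - 2)%nat /\ Nat.odd p = true /\ Nat.odd q = true /\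
    al = INR p / INR q.

Definition good_sequence (a : nat) (s : state) : Prop :=
  (forall n, periodic a n s) /\
  exists N, (forall n, (N <= n)%nat -> path a (S n) s = path a n s) /\
    carpet_periodic_orbit a (path a N s).

(* Main.v *)
Require Import Defs.
From Stdlib Require Import Reals Arith Lra Lia ZArith List Classical ClassicalEpsilon FinFun FunctionalExtensionality PropExtensionality.
Import ListNotations.
Open Scope R_scope.

Definition slope (p q : nat) : R := INR p / INR q.

Definition Cond (a p q n0 : nat) (md : bool) : Prop :=
  (3 <= a)%nat /\ Nat.odd a = true /\ (1 <= q)%nat /\ (p + q < a)%nat /\
  (if md then Nat.odd p = true /\ Nat.odd q = true /\ (1 <= p)%nat
   else Nat.odd (p + q) = true /\ n0 = 0%nat).

Definition Lval (a n0 q : nat) (x v : pt) : R :=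
  2 * INR a ^ n0 * INR q * (fst v * snd x - snd v * fst x).

Definition OL (a p q n0 : nat) (md : bool) (x v : pt) : Prop :=
  exists e1 e2 z : Z, (e1 = 1 \/ e1 = -1)%Z /\ (e2 = 1 \/ e2 = -1)%Z /\
    v = (IZR e1, IZR e2 * slope p q) /\ Z.odd z = md /\ Lval a n0 q x v = IZR z.

Lemma zodd_nat n : Z.odd (Z.of_nat n) = Nat.odd n.
Proof.
  induction n as [|n IH]; [reflexivity|].
  rewrite Nat2Z.inj_succ, Z.odd_succ, <- Z.negb_odd, IH, Nat.odd_succ, <- Nat.negb_odd.
  reflexivity.
Qed.

Lemma odd_pow_nat a m : Nat.odd a = true -> Nat.odd (a ^ m) = true.
Proof.
  intros H. destruct m as [|m]; [reflexivity|]. rewrite Nat.odd_pow; auto.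
Qed.

Lemma mid_eq a : Nat.odd a = true -> INR a = 2 * INR (mid a) + 1.
Proof.
  intros H. unfold mid. pose proof (Nat.div2_odd a) as E. rewrite H in E. change (Nat.b2n true) with 1%nat in E.
  rewrite E at 1. rewrite plus_INR, mult_INR. simpl. lra.
Qed.

Lemma odd_abs_ge1 (N : Z) : Z.odd N = true -> IZR N >= 1 \/ IZR N <= -1.
Proof.
  intros H. assert (N <> 0%Z) by (intro; subst; discriminate).
  destruct (Z_le_gt_dec N (-1)) as [h|h].
  - right. apply IZR_le in h. exact h.
  - left. assert (1 <= N)%Z by lia. apply IZR_le in H1. lra.
Qed.

Lemma avoid a p q n0 md k i j (y v : pt) :
  Cond a p q n0 md -> OL a p q n0 md y v -> (n0 < k)%nat ->
  llx a k i <= fst y <= llx a k i + side a k ->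
  llx a k j <= snd y <= llx a k j + side a k -> False.
Proof.
  intros [Ha3 [Hao [Hq1 [Hpq Hmd]]]] [e1 [e2 [z [He1 [He2 [Hv [Hz HL]]]]]]] Hk Hb1 Hb2.
  subst v. unfold Lval, slope in HL. simpl in HL.
  set (A := INR a) in *.
  assert (HA : A = 2 * INR (mid a) + 1) by (apply mid_eq; auto).
  assert (HA3 : 3 <= A) by (assert (INR 3 <= A) by (unfold A; apply le_INR; lia); simpl in H; lra).
  assert (Hpqr : INR p + INR q + 1 <= A) by (unfold A; rewrite <- plus_INR, <- S_INR; apply le_INR; lia).
  assert (Hq : INR q > 0) by (apply lt_0_INR; lia).
  assert (Hp0 : INR p >= 0) by (apply Rle_ge, pos_INR).
  set (m := (k - 1 - n0)%nat).
  assert (Hkm : k = (n0 + 1 + m)%nat) by (unfold m; lia).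
  assert (HAk : A ^ k = A ^ n0 * A * A ^ m) by (rewrite Hkm, !pow_add; ring).
  assert (HAkpos : A ^ k > 0) by (apply pow_lt; lra).
  unfold llx, side in Hb1, Hb2. fold A in Hb1, Hb2.
  set (C1 := INR (a * i + mid a)) in *.
  set (C2 := INR (a * j + mid a)) in *.
  set (u1 := fst y * A ^ k - C1).
  set (u2 := snd y * A ^ k - C2).
  assert (Hu1 : 0 <= u1 <= 1).
  { unfold u1. destruct Hb1 as [h1 h2]. split.
    - apply Rmult_le_compat_r with (r := A ^ k) in h1; [|lra].
      rewrite Rmult_assoc, Rinv_l in h1 by lra. lra.
    - apply Rmult_le_compat_r with (r := A ^ k) in h2; [|lra].
      rewrite Rmult_plus_distr_r, Rmult_assoc, Rinv_l in h2 by lra. lra. }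
  assert (Hu2 : 0 <= u2 <= 1).
  { unfold u2. destruct Hb2 as [h1 h2]. split.
    - apply Rmult_le_compat_r with (r := A ^ k) in h1; [|lra].
      rewrite Rmult_assoc, Rinv_l in h1 by lra. lra.
    - apply Rmult_le_compat_r with (r := A ^ k) in h2; [|lra].
      rewrite Rmult_plus_distr_r, Rmult_assoc, Rinv_l in h2 by lra. lra. }
  set (N := (e1 * Z.of_nat q * (2 * Z.of_nat j + 1) - e2 * Z.of_nat p * (2 * Z.of_nat i + 1)
             - Z.of_nat (a ^ m) * z)%Z).
  assert (HN : IZR N * A = - (IZR e1 * INR q * (2 * u2 - 1) - IZR e2 * INR p * (2 * u1 - 1))).
  { unfold N. rewrite !minus_IZR, !mult_IZR, !plus_IZR, !mult_IZR.
    rewrite <- !INR_IZR_INZ, pow_INR. fold A.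
    rewrite <- HL. unfold u1, u2, C1, C2. rewrite HAk, !plus_INR, !mult_INR. fold A.
    assert (Hc : INR (mid a) = (A - 1) / 2) by lra. rewrite Hc.
    field. lra. }
  assert (Hodd : Z.odd N = true).
  { unfold N. rewrite !Z.odd_sub, !Z.odd_mul, !Z.odd_add, !Z.odd_mul, !zodd_nat, Hz.
    rewrite (odd_pow_nat a m Hao).
    assert (Z.odd e1 = true) by (destruct He1 as [h|h]; rewrite h; reflexivity).
    assert (Z.odd e2 = true) by (destruct He2 as [h|h]; rewrite h; reflexivity).
    rewrite H, H0. simpl.
    destruct md.
    - destruct Hmd as [h1 [h2 _]]. rewrite h1, h2. reflexivity.
    - destruct Hmd as [h1 _]. rewrite Nat.odd_add in h1.
      destruct (Nat.odd p), (Nat.odd q); simpl in *; try discriminate; reflexivity. }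
  assert (Hbnd : - (INR q + INR p) <= - (IZR e1 * INR q * (2 * u2 - 1) - IZR e2 * INR p * (2 * u1 - 1)) <= INR q + INR p).
  { destruct He1 as [h|h]; destruct He2 as [h'|h']; subst e1 e2; simpl;
      split; nra. }
  rewrite <- HN in Hbnd.
  destruct (odd_abs_ge1 N Hodd) as [h|h]; nra.
Qed.

Lemma OL_move a p q n0 md x v t : OL a p q n0 md x v -> OL a p q n0 md (move x v t) v.
Proof.
  intros [e1 [e2 [z [H1 [H2 [H3 [H4 H5]]]]]]]. exists e1, e2, z. repeat split; auto.
  rewrite <- H5. unfold Lval, move. simpl. ring.
Qed.

Lemma coord_nice a n0 k i (w : R) : (1 <= a)%nat -> (k <= n0)%nat ->
  (w = llx a k i \/ w = llx a k i + side a k) -> exists m : Z, w * INR a ^ n0 = IZR m.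
Proof.
  intros Ha Hk Hw.
  assert (HA : INR a > 0) by (apply lt_0_INR; lia).
  assert (E : INR a ^ n0 = INR a ^ k * INR a ^ (n0 - k)) by (rewrite <- pow_add; f_equal; lia).
  assert (HAk : INR a ^ k <> 0) by (apply pow_nonzero; lra).
  destruct Hw as [Hw|Hw]; subst w; unfold llx, side.
  - exists (Z.of_nat ((a * i + mid a) * a ^ (n0 - k))).
    rewrite <- INR_IZR_INZ, mult_INR, pow_INR, E. field. auto.
  - exists (Z.of_nat ((a * i + mid a + 1) * a ^ (n0 - k))).
    rewrite <- INR_IZR_INZ, mult_INR, pow_INR, E, !plus_INR. change (INR 1) with 1. field. auto.
Qed.

Lemma side_pos a k : (1 <= a)%nat -> side a k > 0.
Proof. intros. unfold side. apply Rinv_0_lt_compat, pow_lt, lt_0_INR; lia. Qed.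

Lemma nice_vwall a p q n0 md n (y v : pt) : Cond a p q n0 md -> OL a p q n0 md y v ->
  on_vwall a n y -> exists m : Z, fst y * INR a ^ n0 = IZR m.
Proof.
  intros HC HO [[[Hx|Hx] Hy] | [k [i [j [Hper [Hx Hy]]]]]].
  - exists 0%Z. rewrite Hx. simpl. ring.
  - exists (Z.of_nat (a ^ n0)). rewrite Hx, <- INR_IZR_INZ, pow_INR. ring.
  - assert (Ha1 : (1 <= a)%nat) by (destruct HC; lia).
    destruct (le_lt_dec k n0) as [h|h].
    + apply (coord_nice a n0 k i); auto.
    + exfalso. apply (avoid a p q n0 md k i j y v HC HO h); auto.
      pose proof (side_pos a k Ha1). destruct Hx as [Hx|Hx]; rewrite Hx; lra.
Qed.

Lemma nice_hwall a p q n0 md n (y v : pt) : Cond a p q n0 md -> OL a p q n0 md y v ->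
  on_hwall a n y -> exists m : Z, snd y * INR a ^ n0 = IZR m.
Proof.
  intros HC HO [[[Hx|Hx] Hy] | [k [i [j [Hper [Hx Hy]]]]]].
  - exists 0%Z. rewrite Hx. simpl. ring.
  - exists (Z.of_nat (a ^ n0)). rewrite Hx, <- INR_IZR_INZ, pow_INR. ring.
  - assert (Ha1 : (1 <= a)%nat) by (destruct HC; lia).
    destruct (le_lt_dec k n0) as [h|h].
    + apply (coord_nice a n0 k j); auto.
    + exfalso. apply (avoid a p q n0 md k i j y v HC HO h); auto.
      pose proof (side_pos a k Ha1). destruct Hx as [Hx|Hx]; rewrite Hx; lra.
Qed.

Lemma pcorner_false a p q n0 md n (y v : pt) : Cond a p q n0 md -> OL a p q n0 md y v ->
  pcorner a n y -> False.
Proof.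
  intros HC HO [k [i [j [Hper [Hx Hy]]]]].
  assert (Ha1 : (1 <= a)%nat) by (destruct HC; lia).
  pose proof (side_pos a k Ha1).
  destruct (le_lt_dec k n0) as [h|h].
  - destruct (coord_nice a n0 k i (fst y) Ha1 h Hx) as [m1 Hm1].
    destruct (coord_nice a n0 k j (snd y) Ha1 h Hy) as [m2 Hm2].
    destruct HO as [e1 [e2 [z [H1 [H2 [H3 [H4 H5]]]]]]].
    destruct HC as [_ [_ [Hq [_ Hmd]]]].
    destruct Hper as [Hk1 _].
    destruct md.
    + assert (Ez : z = (2 * (e1 * Z.of_nat q * m2 - e2 * Z.of_nat p * m1))%Z).
      { apply eq_IZR. rewrite <- H5. subst v. unfold Lval, slope. cbn [fst snd].
        rewrite mult_IZR, minus_IZR, !mult_IZR, <- !INR_IZR_INZ, <- Hm1, <- Hm2.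
        field. apply not_0_INR. lia. }
      rewrite Ez, Z.odd_mul in H4. simpl in H4. discriminate.
    + destruct Hmd as [_ Hn0]. lia.
  - apply (avoid a p q n0 md k i j y v HC HO h).
    + destruct Hx as [Hx|Hx]; rewrite Hx; lra.
    + destruct Hy as [Hy|Hy]; rewrite Hy; lra.
Qed.

Definition Mr (a p q n0 : nat) : R := 2 * INR (Nat.max p 1) * INR q * INR a ^ n0.

Definition Inv (a p q n0 : nat) (md : bool) (n : nat) (x v : pt) : Prop :=
  OL a p q n0 md x v /\
  0 <= fst x <= 1 /\ 0 <= snd x <= 1 /\
  (fst x = 0 -> 0 < fst v) /\ (fst x = 1 -> fst v < 0) /\
  (snd x = 0 -> 0 <= snd v) /\ (snd x = 1 -> snd v <= 0) /\
  (exists z1 z2 : Z, fst x * Mr a p q n0 = IZR z1 /\ snd x * Mr a p q n0 = IZR z2) /\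
  (hhit a n v x \/ vhit a n v x).

Lemma al_pos p q : (1 <= q)%nat -> 0 <= slope p q.
Proof. intros. unfold slope. apply Rmult_le_pos; [apply pos_INR | left; apply Rinv_0_lt_compat, lt_0_INR; lia]. Qed.

Lemma al_nz p q : (1 <= q)%nat -> slope p q <> 0 -> (1 <= p)%nat.
Proof. intros Hq H. destruct p; [|lia]. exfalso; apply H. unfold slope. simpl. field. apply not_0_INR; lia. Qed.

Lemma OL_flipV a p q n0 md n (y v : pt) : Cond a p q n0 md -> OL a p q n0 md y v ->
  on_vwall a n y -> OL a p q n0 md y (- fst v, snd v).
Proof.
  intros HC HO Hw. destruct (nice_vwall a p q n0 md n y v HC HO Hw) as [m Hm].
  destruct HO as [e1 [e2 [z [H1 [H2 [H3 [H4 H5]]]]]]].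
  exists (- e1)%Z, e2, (- z - 4 * e2 * Z.of_nat p * m)%Z. subst v. cbn [fst snd].
  destruct HC as [_ [_ [Hq _]]].
  repeat split.
  - lia.
  - auto.
  - rewrite opp_IZR. reflexivity.
  - rewrite Z.odd_sub, Z.odd_opp, !Z.odd_mul. simpl. rewrite H4. destruct md; reflexivity.
  - rewrite minus_IZR, opp_IZR, !mult_IZR, <- H5, <- Hm, <- INR_IZR_INZ. unfold Lval, slope. cbn [fst snd].
    field. apply not_0_INR. lia.
Qed.

Lemma OL_flipH a p q n0 md n (y v : pt) : Cond a p q n0 md -> OL a p q n0 md y v ->
  on_hwall a n y -> OL a p q n0 md y (fst v, - snd v).
Proof.
  intros HC HO Hw. destruct (nice_hwall a p q n0 md n y v HC HO Hw) as [m Hm].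
  destruct HO as [e1 [e2 [z [H1 [H2 [H3 [H4 H5]]]]]]].
  exists e1, (- e2)%Z, (- z + 4 * e1 * Z.of_nat q * m)%Z. subst v. cbn [fst snd].
  destruct HC as [_ [_ [Hq _]]].
  repeat split.
  - auto.
  - lia.
  - rewrite opp_IZR. f_equal; ring.
  - rewrite Z.odd_add, Z.odd_opp, !Z.odd_mul. simpl. rewrite H4. destruct md; reflexivity.
  - rewrite plus_IZR, opp_IZR, !mult_IZR, <- H5, <- Hm, <- INR_IZR_INZ. unfold Lval, slope. cbn [fst snd].
    field. apply not_0_INR. lia.
Qed.

Lemma latV a p q n0 md n (y v : pt) : Cond a p q n0 md -> OL a p q n0 md y v ->
  on_vwall a n y ->
  exists z1 z2 : Z, fst y * Mr a p q n0 = IZR z1 /\ snd y * Mr a p q n0 = IZR z2.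
Proof.
  intros HC HO Hw. destruct (nice_vwall a p q n0 md n y v HC HO Hw) as [m Hm].
  destruct HO as [e1 [e2 [z [H1 [H2 [H3 [H4 H5]]]]]]].
  destruct HC as [_ [_ [Hq _]]].
  set (P' := Z.of_nat (Nat.max p 1)).
  exists (2 * P' * Z.of_nat q * m)%Z, (P' * e1 * (z + 2 * e2 * Z.of_nat p * m))%Z.
  subst v. unfold Lval, slope, Mr in *. cbn [fst snd] in *. unfold P'.
  split.
  - rewrite !mult_IZR, <- !INR_IZR_INZ, <- Hm. ring.
  - rewrite !mult_IZR, plus_IZR, !mult_IZR, <- !INR_IZR_INZ, <- Hm, <- H5.
    assert (INR q <> 0) by (apply not_0_INR; lia).
    destruct H1 as [h|h]; rewrite h; simpl; field; auto.
Qed.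

Lemma latH a p q n0 md n (y v : pt) : Cond a p q n0 md -> OL a p q n0 md y v ->
  on_hwall a n y -> snd v <> 0 ->
  exists z1 z2 : Z, fst y * Mr a p q n0 = IZR z1 /\ snd y * Mr a p q n0 = IZR z2.
Proof.
  intros HC HO Hw Hs. destruct (nice_hwall a p q n0 md n y v HC HO Hw) as [m Hm].
  destruct HO as [e1 [e2 [z [H1 [H2 [H3 [H4 H5]]]]]]].
  destruct HC as [_ [_ [Hq _]]].
  subst v. cbn [fst snd] in Hs.
  assert (Hp : (1 <= p)%nat) by (apply (al_nz p q Hq); intro h; apply Hs; rewrite h; ring).
  assert (Ep : Nat.max p 1 = p) by lia.
  exists (Z.of_nat q * e2 * (2 * Z.of_nat q * e1 * m - z))%Z, (2 * Z.of_nat p * Z.of_nat q * m)%Z.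
  unfold Lval, slope, Mr in *. cbn [fst snd] in *. rewrite Ep.
  split.
  - rewrite !mult_IZR, minus_IZR, !mult_IZR, <- !INR_IZR_INZ, <- Hm, <- H5.
    assert (INR q <> 0) by (apply not_0_INR; lia).
    destruct H2 as [h|h]; rewrite h; destruct H1 as [h'|h']; rewrite h'; simpl; field; auto.
  - rewrite !mult_IZR, <- !INR_IZR_INZ, <- Hm. ring.
Qed.

Lemma exit1 (x u : R) : 0 <= x <= 1 -> u <> 0 -> (x = 0 -> 0 < u) -> (x = 1 -> u < 0) ->
  exists T, 0 < T /\ (x + T * u = 0 \/ x + T * u = 1) /\
    forall t, 0 <= t <= T -> 0 <= x + t * u <= 1.
Proof.
  intros Hx Hu H0 H1.
  destruct (Rlt_dec 0 u) as [hu|hu].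
  - assert (x < 1) by (destruct (Req_dec x 1) as [e|e]; [specialize (H1 e); lra | lra]).
    exists ((1 - x) / u). split; [apply Rdiv_lt_0_compat; lra|]. split.
    + right. field. lra.
    + intros t [ht1 ht2]. split; [nra|].
      apply Rmult_le_compat_r with (r := u) in ht2; [|lra].
      unfold Rdiv in ht2. rewrite Rmult_assoc, Rinv_l in ht2 by lra. lra.
  - assert (u < 0) by lra.
    assert (0 < x) by (destruct (Req_dec x 0) as [e|e]; [specialize (H0 e); lra | lra]).
    exists (- x / u). split.
    + replace (- x / u) with (x / (- u)) by (field; lra). apply Rdiv_lt_0_compat; lra.
    + split; [left; field; lra|].
      intros t [ht1 ht2]. split; [|nra].
      apply Rmult_le_compat_r with (r := - u) in ht2; [|lra].
      assert (- x / u * - u = x) by (field; lra). nra.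
Qed.

Lemma exit a p q n0 md n (x v : pt) : Cond a p q n0 md -> Inv a p q n0 md n x v ->
  exists T, 0 < T /\ hits a n x v T /\
    forall t, 0 <= t <= T -> 0 <= fst (move x v t) <= 1 /\ 0 <= snd (move x v t) <= 1.
Proof.
  intros HC [HO [Hx1 [Hx2 [Hi1 [Hi2 [Hi3 [Hi4 _]]]]]]].
  assert (Hv1 : fst v <> 0).
  { destruct HO as [e1 [e2 [z [H1 [_ [H3 _]]]]]]. subst v. simpl.
    destruct H1 as [h|h]; rewrite h; simpl; lra. }
  destruct (exit1 (fst x) (fst v) Hx1 Hv1 Hi1 Hi2) as [T1 [HT1 [HT1b HT1r]]].
  unfold hits, hhit, vhit, move, on_hwall, on_vwall. cbn [fst snd].
  destruct (Req_dec (snd v) 0) as [h0|h0].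
  - exists T1. split; auto. split.
    + right. split; auto. left. split; auto. rewrite h0, Rmult_0_r, Rplus_0_r. auto.
    + intros t ht. split; auto. rewrite h0, Rmult_0_r, Rplus_0_r. auto.
  - assert (Hi3' : snd x = 0 -> 0 < snd v) by (intro e; specialize (Hi3 e); lra).
    assert (Hi4' : snd x = 1 -> snd v < 0) by (intro e; specialize (Hi4 e); lra).
    destruct (exit1 (snd x) (snd v) Hx2 h0 Hi3' Hi4') as [T2 [HT2 [HT2b HT2r]]].
    destruct (Rle_dec T1 T2) as [hl|hl].
    + exists T1. split; auto. split.
      * right. split; auto. left. split; auto. apply HT2r. lra.
      * intros t ht. split; [apply HT1r | apply HT2r]; lra.
    + exists T2. split; auto. split.
      * left. split; auto. left. split; auto. apply HT1r. lra.
      * intros t ht. split; [apply HT1r | apply HT2r]; lra.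
Qed.

Definition Kr (a p q n0 : nat) : R := Mr a p q n0 * INR (Nat.max p 1).

Lemma Kr_pos a p q n0 : (1 <= a)%nat -> (1 <= q)%nat -> Kr a p q n0 > 0.
Proof.
  intros. unfold Kr, Mr.
  assert (INR (Nat.max p 1) > 0) by (apply lt_0_INR; lia).
  assert (INR q > 0) by (apply lt_0_INR; lia).
  assert (INR a ^ n0 > 0) by (apply pow_lt, lt_0_INR; lia).
  repeat apply Rmult_lt_0_compat; lra.
Qed.

Lemma disc a p q n0 md n (x v : pt) t : Cond a p q n0 md -> Inv a p q n0 md n x v ->
  0 < t -> hits a n x v t -> exists m : nat, t * Kr a p q n0 = INR m.
Proof.
  intros HC [HO [_ [_ [_ [_ [_ [_ [[z1 [z2 [Hz1 Hz2]]] _]]]]]]]] Ht Hh.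
  assert (HO' := OL_move a p q n0 md x v t HO).
  assert (Hq : (1 <= q)%nat) by (destruct HC as [_ [_ [h _]]]; exact h).
  assert (Ha : (1 <= a)%nat) by (destruct HC; lia).
  assert (HK := Kr_pos a p q n0 Ha Hq).
  cut (exists w : Z, t * Kr a p q n0 = IZR w).
  { intros [w Hw]. exists (Z.to_nat w).
    assert (0 < IZR w) by (rewrite <- Hw; apply Rmult_lt_0_compat; lra).
    apply lt_IZR in H. rewrite INR_IZR_INZ, Z2Nat.id by lia. exact Hw. }
  destruct Hh as [[Hs Hw] | [Hs Hw]].
  - destruct (nice_hwall a p q n0 md n _ v HC HO' Hw) as [m Hm].
    destruct HO as [e1 [e2 [z [H1 [H2 [H3 [H4 H5]]]]]]]. subst v.
    cbn [fst snd] in *. unfold move in Hm. cbn [fst snd] in Hm.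
    assert (Hp : (1 <= p)%nat) by (apply (al_nz p q Hq); intro h; apply Hs; rewrite h; ring).
    assert (Ep : Nat.max p 1 = p) by lia.
    exists (e2 * Z.of_nat q * (2 * Z.of_nat p * Z.of_nat q * m - z2))%Z.
    unfold Kr, Mr, slope in *. rewrite Ep in *.
    rewrite !mult_IZR, minus_IZR, !mult_IZR, <- !INR_IZR_INZ, <- Hm, <- Hz2.
    assert (INR q <> 0) by (apply not_0_INR; lia).
    destruct H2 as [h|h]; rewrite h; simpl; field; auto.
  - destruct (nice_vwall a p q n0 md n _ v HC HO' Hw) as [m Hm].
    destruct HO as [e1 [e2 [z [H1 [H2 [H3 [H4 H5]]]]]]]. subst v.
    cbn [fst snd] in *. unfold move in Hm. cbn [fst snd] in Hm.
    set (P' := Z.of_nat (Nat.max p 1)).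
    exists (e1 * P' * (2 * P' * Z.of_nat q * m - z1))%Z.
    unfold Kr, Mr, slope, P' in *.
    rewrite !mult_IZR, minus_IZR, !mult_IZR, <- !INR_IZR_INZ, <- Hm, <- Hz1.
    destruct H1 as [h|h]; rewrite h; simpl; ring.
Qed.

Lemma least_nat (P : nat -> Prop) : (exists n, P n) -> exists n, P n /\ forall m, (m < n)%nat -> ~ P m.
Proof.
  intros [n Hn]. apply NNPP. intro Hno.
  assert (forall k m, (m <= k)%nat -> ~ P m).
  { induction k as [|k IH]; intros m Hm HP.
    - apply Hno. exists m. split; auto. intros; lia.
    - apply Hno. exists m. split; auto. intros m' hm' HP'. apply (IH m'); auto. lia. }
  apply (H n n); auto.
Qed.

Lemma inv_post a p q n0 md n (x v w : pt) t : Cond a p q n0 md -> Inv a p q n0 md n x v ->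
  0 < t -> hits a n x v t ->
  0 <= fst (move x v t) <= 1 -> 0 <= snd (move x v t) <= 1 ->
  (vhit a n v (move x v t) -> fst w = - fst v) -> (~ vhit a n v (move x v t) -> fst w = fst v) ->
  (hhit a n v (move x v t) -> snd w = - snd v) -> (~ hhit a n v (move x v t) -> snd w = snd v) ->
  Inv a p q n0 md n (move x v t) w.
Proof.
  intros HC HI Ht Hh Hy1 Hy2 R1 R2 R3 R4.
  destruct HI as [HO [Hx1 [Hx2 _]]].
  assert (HOy := OL_move a p q n0 md x v t HO).
  set (y := move x v t) in *.
  assert (Hq : (1 <= q)%nat) by (destruct HC as [_ [_ [h _]]]; exact h).
  assert (Hal := al_pos p q Hq).
  destruct HO as [e1 [e2 [z [He1 [He2 [Hv _]]]]]].
  assert (Hy1e : fst y = fst x + t * IZR e1) by (unfold y, move; rewrite Hv; reflexivity).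
  assert (Hy2e : snd y = snd x + t * (IZR e2 * slope p q)) by (unfold y, move; rewrite Hv; reflexivity).
  assert (Hv1 : fst v = IZR e1) by (rewrite Hv; reflexivity).
  assert (Hv2 : snd v = IZR e2 * slope p q) by (rewrite Hv; reflexivity).
  assert (Hv1nz : fst v <> 0) by (rewrite Hv1; destruct He1 as [h|h]; rewrite h; simpl; lra).
  destruct w as [w1 w2]. cbn [fst snd] in R1, R2, R3, R4.
  split; [|split; [auto|split; [auto|]]].
  { destruct (classic (vhit a n v y)) as [hv|hv]; destruct (classic (hhit a n v y)) as [hh|hh].
    - rewrite (R1 hv), (R3 hh).
      pose proof (OL_flipV a p q n0 md n y v HC HOy (proj2 hv)) as h1.
      pose proof (OL_flipH a p q n0 md n y _ HC h1 (proj2 hh)) as h2. exact h2.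
    - rewrite (R1 hv), (R4 hh). apply (OL_flipV a p q n0 md n y v HC HOy (proj2 hv)).
    - rewrite (R2 hv), (R3 hh). apply (OL_flipH a p q n0 md n y v HC HOy (proj2 hh)).
    - exfalso. destruct Hh; auto. }
  split; [|split; [|split; [|split; [|split]]]]; cbn [fst snd].
  - intro e. assert (hv : vhit a n v y) by (split; auto; left; split; auto).
    rewrite (R1 hv), Hv1. destruct He1 as [h|h]; rewrite h in *; simpl in *; lra.
  - intro e. assert (hv : vhit a n v y) by (split; auto; left; split; auto).
    rewrite (R1 hv), Hv1. destruct He1 as [h|h]; rewrite h in *; simpl in *; lra.
  - intro e. destruct (Req_dec (snd v) 0) as [h0|h0].
    + assert (~ hhit a n v y) by (intros [hh _]; auto). rewrite (R4 H). lra.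
    + assert (hh : hhit a n v y) by (split; auto; left; split; auto).
      rewrite (R3 hh), Hv2. rewrite Hv2 in h0.
      assert (slope p q <> 0) by (intro hz; apply h0; rewrite hz; ring).
      destruct He2 as [h|h]; rewrite h in *; simpl in *; nra.
  - intro e. destruct (Req_dec (snd v) 0) as [h0|h0].
    + assert (~ hhit a n v y) by (intros [hh _]; auto). rewrite (R4 H). lra.
    + assert (hh : hhit a n v y) by (split; auto; left; split; auto).
      rewrite (R3 hh), Hv2. rewrite Hv2 in h0.
      assert (slope p q <> 0) by (intro hz; apply h0; rewrite hz; ring).
      destruct He2 as [h|h]; rewrite h in *; simpl in *; nra.
  - destruct (classic (vhit a n v y)) as [hv|hv].
    + apply (latV a p q n0 md n y v HC HOy (proj2 hv)).
    + destruct Hh as [hh|hh]; [|contradiction].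
      apply (latH a p q n0 md n y v HC HOy (proj2 hh) (proj1 hh)).
  - destruct Hh as [hh|hv].
    + left. split; [|exact (proj2 hh)]. cbn [snd]. rewrite (R3 hh). intro e. apply (proj1 hh). lra.
    + right. split; [|exact (proj2 hv)]. cbn [fst]. rewrite (R1 hv). intro e. apply (proj1 hv). lra.
Qed.

Lemma step_exists a p q n0 md n (x v : pt) : Cond a p q n0 md -> Inv a p q n0 md n x v ->
  exists y w, step a n (x, v) (y, w) /\ Inv a p q n0 md n y w.
Proof.
  intros HC HI.
  assert (Hq : (1 <= q)%nat) by (destruct HC as [_ [_ [h _]]]; exact h).
  assert (Ha : (1 <= a)%nat) by (destruct HC; lia).
  assert (HK := Kr_pos a p q n0 Ha Hq).
  destruct (exit a p q n0 md n x v HC HI) as [T [HT [HTh HTr]]].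
  set (P := fun m : nat => 0 < INR m / Kr a p q n0 /\ hits a n x v (INR m / Kr a p q n0)).
  assert (HP : exists m, P m).
  { destruct (disc a p q n0 md n x v T HC HI HT HTh) as [m Hm]. exists m. unfold P.
    replace (INR m / Kr a p q n0) with T by (rewrite <- Hm; field; lra). auto. }
  destruct (least_nat P HP) as [m0 [[Ht Hth] Hmin]].
  set (t := INR m0 / Kr a p q n0) in *.
  assert (Hfirst : forall t', 0 < t' < t -> ~ hits a n x v t').
  { intros t' [h1 h2] hh. destruct (disc a p q n0 md n x v t' HC HI h1 hh) as [m Hm].
    apply (Hmin m).
    - apply INR_lt. rewrite <- Hm. unfold t in h2.
      apply Rmult_lt_compat_r with (r := Kr a p q n0) in h2; [|lra].
      unfold Rdiv in h2. rewrite Rmult_assoc, Rinv_l in h2 by lra. lra.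
    - unfold P. replace (INR m / Kr a p q n0) with t' by (rewrite <- Hm; field; lra). auto. }
  assert (HtT : t <= T).
  { destruct (Rle_dec t T) as [h|h]; auto. exfalso. apply (Hfirst T); auto. lra. }
  destruct (HTr t) as [Hy1 Hy2]; [lra|].
  set (y := move x v t).
  set (b1 := if excluded_middle_informative (vhit a n v y) then - fst v else fst v).
  set (b2 := if excluded_middle_informative (hhit a n v y) then - snd v else snd v).
  assert (R1 : vhit a n v y -> b1 = - fst v)
    by (intro h; unfold b1; destruct (excluded_middle_informative (vhit a n v y)); first [reflexivity | contradiction]).
  assert (R2 : ~ vhit a n v y -> b1 = fst v)
    by (intro h; unfold b1; destruct (excluded_middle_informative (vhit a n v y)); first [reflexivity | contradiction]).
  assert (R3 : hhit a n v y -> b2 = - snd v)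
    by (intro h; unfold b2; destruct (excluded_middle_informative (hhit a n v y)); first [reflexivity | contradiction]).
  assert (R4 : ~ hhit a n v y -> b2 = snd v)
    by (intro h; unfold b2; destruct (excluded_middle_informative (hhit a n v y)); first [reflexivity | contradiction]).
  exists y, (b1, b2). split.
  - simpl. exists t. split; [lra|]. split; [auto|]. split; [auto|]. split; [reflexivity|].
    split.
    + intro hc. destruct HI as [HO _]. apply (pcorner_false a p q n0 md n y v HC (OL_move a p q n0 md x v t HO) hc).
    + simpl. auto.
  - apply (inv_post a p q n0 md n x v (b1, b2) t HC HI); auto.
Qed.

Lemma step_det a n s s1 s2 : step a n s s1 -> step a n s s2 -> s1 = s2.
Proof.
  destruct s as [x v], s1 as [y1 w1], s2 as [y2 w2]. simpl.
  intros [t1 [a1 [b1 [c1 [d1 [e1 [f1 [g1 [h1 i1]]]]]]]]]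
         [t2 [a2 [b2 [c2 [d2 [e2 [f2 [g2 [h2 i2]]]]]]]]].
  assert (t1 = t2).
  { destruct (Rtotal_order t1 t2) as [h|[h|h]]; auto.
    - exfalso. apply (c2 t1); auto.
    - exfalso. apply (c1 t2); auto. }
  subst t2. rewrite <- d2 in d1. subst y2. subst y1.
  destruct w1 as [u1 u2], w2 as [u1' u2']. cbn [fst snd] in *.
  f_equal; f_equal.
  - destruct (classic (vhit a n v (move x v t1))) as [h|h].
    + rewrite (f1 h), (f2 h). reflexivity.
    + rewrite (g1 h), (g2 h). reflexivity.
  - destruct (classic (hhit a n v (move x v t1))) as [h|h].
    + rewrite (h1 h), (h2 h). reflexivity.
    + rewrite (i1 h), (i2 h). reflexivity.
Qed.

Lemma OL_dir a p q n0 md (x v : pt) : OL a p q n0 md x v ->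
  fst v <> 0 /\ (snd v = 0 <-> slope p q = 0).
Proof.
  intros [e1 [e2 [z [H1 [H2 [H3 _]]]]]]. subst v. cbn [fst snd].
  split.
  - destruct H1 as [h|h]; rewrite h; simpl; lra.
  - destruct H2 as [h|h]; rewrite h; simpl; split; intro; lra.
Qed.

Lemma step_back a p q n0 md n (x v x' v' y w : pt) :
  Inv a p q n0 md n x v -> Inv a p q n0 md n x' v' ->
  step a n (x, v) (y, w) -> step a n (x', v') (y, w) -> x = x' /\ v = v'.
Proof.
  intros HI HI' Hs Hs'.
  destruct (OL_dir _ _ _ _ _ _ _ (proj1 HI)) as [Hv1 Hv2].
  destruct (OL_dir _ _ _ _ _ _ _ (proj1 HI')) as [Hv1' Hv2'].
  assert (Hgood := proj2 (proj2 (proj2 (proj2 (proj2 (proj2 (proj2 (proj2 HI)))))))).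
  assert (Hgood' := proj2 (proj2 (proj2 (proj2 (proj2 (proj2 (proj2 (proj2 HI')))))))).
  simpl in Hs, Hs'.
  destruct Hs as [t [a1 [b1 [c1 [d1 [e1 [f1 [g1 [h1 i1]]]]]]]]].
  destruct Hs' as [t' [a2 [b2 [c2 [d2 [e2 [f2 [g2 [h2 i2]]]]]]]]].
  assert (Hvv : vhit a n v y <-> vhit a n v' y) by (unfold vhit; tauto).
  assert (Hhh : hhit a n v y <-> hhit a n v' y).
  { unfold hhit. split; intros [h h']; split; auto; intro e; apply h; tauto. }
  assert (Ev : v = v').
  { destruct v as [v1 v2], v' as [v1' v2']. cbn [fst snd] in *. f_equal.
    - destruct (classic (vhit a n (v1, v2) y)) as [h|h].
      + pose proof (f1 h). pose proof (f2 (proj1 Hvv h)). lra.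
      + assert (~ vhit a n (v1', v2') y) by tauto.
        pose proof (g1 h). pose proof (g2 H). lra.
    - destruct (classic (hhit a n (v1, v2) y)) as [h|h].
      + pose proof (h1 h). pose proof (h2 (proj1 Hhh h)). lra.
      + assert (~ hhit a n (v1', v2') y) by tauto.
        pose proof (i1 h). pose proof (i2 H). lra. }
  subst v'.
  assert (Ett : t = t').
  { destruct (Rtotal_order t t') as [h|[h|h]]; auto; exfalso.
    - apply (c2 (t' - t)); [lra|].
      unfold hits. replace (move x' v (t' - t)) with x; [exact Hgood|].
      rewrite d1 in d2. unfold move in *. destruct x as [x1 x2], x' as [x1' x2'].
      cbn [fst snd] in *. injection d2; intros. f_equal; nra.
    - apply (c1 (t - t')); [lra|].
      unfold hits. replace (move x v (t - t')) with x'; [exact Hgood'|].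
      rewrite d1 in d2. unfold move in *. destruct x as [x1 x2], x' as [x1' x2'].
      cbn [fst snd] in *. injection d2; intros. f_equal; nra. }
  subst t'. split; auto.
  rewrite d1 in d2. unfold move in *. destruct x as [x1 x2], x' as [x1' x2'].
  cbn [fst snd] in *. injection d2; intros. f_equal; lra.
Qed.

Lemma reach_det a n k s s1 s2 : reach a n k s s1 -> reach a n k s s2 -> s1 = s2.
Proof.
  revert s1 s2. induction k as [|k IH]; simpl; intros s1 s2 H1 H2.
  - congruence.
  - destruct H1 as [u1 [r1 t1]], H2 as [u2 [r2 t2]].
    rewrite (IH _ _ r1 r2) in t1. apply (step_det _ _ _ _ _ t1 t2).
Qed.

Lemma reach_inv a p q n0 md n k s s' : Cond a p q n0 md -> Inv a p q n0 md n (fst s) (snd s) ->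
  reach a n k s s' -> Inv a p q n0 md n (fst s') (snd s').
Proof.
  intros HC HI. revert s'. induction k as [|k IH]; simpl; intros s' H.
  - subst. auto.
  - destruct H as [s1 [r1 t1]]. specialize (IH s1 r1).
    destruct (step_exists a p q n0 md n (fst s1) (snd s1) HC IH) as [y [w [hs hi]]].
    rewrite <- surjective_pairing in hs.
    rewrite (step_det _ _ _ _ _ t1 hs). exact hi.
Qed.

Lemma reach_ex a p q n0 md n s : Cond a p q n0 md -> Inv a p q n0 md n (fst s) (snd s) ->
  forall k, exists s', reach a n k s s'.
Proof.
  intros HC HI k. induction k as [|k IH].
  - exists s. reflexivity.
  - destruct IH as [s1 r1].
    pose proof (reach_inv a p q n0 md n k s s1 HC HI r1) as hi.
    destruct (step_exists a p q n0 md n (fst s1) (snd s1) HC hi) as [y [w [hs _]]].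
    rewrite <- surjective_pairing in hs.
    exists (y, w). simpl. exists s1. auto.
Qed.

Lemma pigeon (A : Type) (L : list A) (f : nat -> A) :
  (forall k, In (f k) L) -> exists i j, (i < j)%nat /\ f i = f j.
Proof.
  intros HL. apply NNPP. intro Hno.
  assert (Hinj : Injective f).
  { intros i j e. destruct (lt_eq_lt_dec i j) as [[h|h]|h]; auto.
    - exfalso. apply Hno. exists i, j. auto.
    - exfalso. apply Hno. exists j, i. auto. }
  assert (HN : NoDup (map f (seq 0 (S (length L))))) by (apply Injective_map_NoDup; auto; apply seq_NoDup).
  assert (Hi : incl (map f (seq 0 (S (length L)))) L).
  { intros u hu. apply in_map_iff in hu. destruct hu as [k [hk _]]. subst. auto. }
  pose proof (NoDup_incl_length HN Hi). rewrite length_map, length_seq in H. lia.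
Qed.

Definition dirs (p q : nat) : list pt :=
  [(IZR 1, IZR 1 * slope p q); (IZR 1, IZR (-1) * slope p q);
   (IZR (-1), IZR 1 * slope p q); (IZR (-1), IZR (-1) * slope p q)].

Definition Mn (a p q n0 : nat) : nat := 2 * Nat.max p 1 * q * a ^ n0.

Lemma Mn_INR a p q n0 : INR (Mn a p q n0) = Mr a p q n0.
Proof. unfold Mn, Mr. rewrite !mult_INR, pow_INR. reflexivity. Qed.

Definition cands (a p q n0 : nat) : list state :=
  flat_map (fun i => flat_map (fun j =>
    map (fun d => ((INR i / Mr a p q n0, INR j / Mr a p q n0), d)) (dirs p q))
    (seq 0 (S (Mn a p q n0)))) (seq 0 (S (Mn a p q n0))).

Lemma coord_in (a p q n0 : nat) (c : R) (z : Z) : (1 <= a)%nat -> (1 <= q)%nat ->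
  0 <= c <= 1 -> c * Mr a p q n0 = IZR z ->
  exists i, (i < S (Mn a p q n0))%nat /\ c = INR i / Mr a p q n0.
Proof.
  intros Ha Hq Hc Hz.
  assert (HM : Mr a p q n0 > 0).
  { pose proof (Kr_pos a p q n0 Ha Hq). unfold Kr in H.
    assert (INR (Nat.max p 1) > 0) by (apply lt_0_INR; lia).
    apply (Rmult_lt_reg_r (INR (Nat.max p 1))); lra. }
  assert (Hz0 : (0 <= z)%Z) by (apply le_IZR; rewrite <- Hz; nra).
  assert (Hz1 : (z <= Z.of_nat (Mn a p q n0))%Z)
    by (apply le_IZR; rewrite <- Hz, <- INR_IZR_INZ, Mn_INR; nra).
  exists (Z.to_nat z). split; [lia|].
  rewrite INR_IZR_INZ, Z2Nat.id by lia. rewrite <- Hz. field. lra.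
Qed.

Lemma inv_in_cands a p q n0 md n (x v : pt) : Cond a p q n0 md -> Inv a p q n0 md n x v ->
  In (x, v) (cands a p q n0).
Proof.
  intros HC [HO [Hx1 [Hx2 [_ [_ [_ [_ [[z1 [z2 [Hz1 Hz2]]] _]]]]]]]].
  assert (Hq : (1 <= q)%nat) by (destruct HC as [_ [_ [h _]]]; exact h).
  assert (Ha : (1 <= a)%nat) by (destruct HC; lia).
  destruct (coord_in a p q n0 _ z1 Ha Hq Hx1 Hz1) as [i [hi ei]].
  destruct (coord_in a p q n0 _ z2 Ha Hq Hx2 Hz2) as [j [hj ej]].
  unfold cands. apply in_flat_map. exists i. split; [apply in_seq; lia|].
  apply in_flat_map. exists j. split; [apply in_seq; lia|].
  apply in_map_iff. exists v. split.
  - destruct x as [x1 x2]. cbn [fst snd] in *. subst. reflexivity.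
  - destruct HO as [e1 [e2 [z [H1 [H2 [H3 _]]]]]]. subst v. unfold dirs.
    destruct H1 as [h|h]; destruct H2 as [h'|h']; rewrite h, h'; simpl; tauto.
Qed.

Lemma step_of_reach a n k s s1 : reach a n (S k) s s1 -> forall s0, reach a n k s s0 -> step a n s0 s1.
Proof.
  simpl. intros [u [r t]] s0 r0. rewrite (reach_det _ _ _ _ _ _ r0 r). exact t.
Qed.

Lemma periodic_of a p q n0 md n s : Cond a p q n0 md -> Inv a p q n0 md n (fst s) (snd s) ->
  periodic a n s.
Proof.
  intros HC HI.
  pose proof (reach_ex a p q n0 md n s HC HI) as Hex.
  split; [exact Hex|].
  set (f := fun k => proj1_sig (constructive_indefinite_description _ (Hex k))).
  assert (Hf : forall k, reach a n k s (f k)) by (intro k; unfold f; exact (proj2_sig _)).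
  assert (Hfi : forall k, Inv a p q n0 md n (fst (f k)) (snd (f k)))
    by (intro k; apply (reach_inv a p q n0 md n k s _ HC HI (Hf k))).
  destruct (pigeon _ (cands a p q n0) f) as [i [j [hij eij]]].
  { intro k. rewrite (surjective_pairing (f k)). apply (inv_in_cands a p q n0 md n _ _ HC (Hfi k)). }
  assert (Hback : forall d, (d <= i)%nat -> f (i - d)%nat = f (j - d)%nat).
  { induction d as [|d IH]; intros hd.
    - rewrite !Nat.sub_0_r. exact eij.
    - specialize (IH ltac:(lia)).
      assert (E1 : (i - d = S (i - S d))%nat) by lia.
      assert (E2 : (j - d = S (j - S d))%nat) by lia.
      pose proof (step_of_reach a n _ s _ (eq_ind _ (fun m => reach a n m s (f (i - d)%nat)) (Hf (i - d)%nat) _ E1) _ (Hf (i - S d)%nat)) as s1.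
      pose proof (step_of_reach a n _ s _ (eq_ind _ (fun m => reach a n m s (f (j - d)%nat)) (Hf (j - d)%nat) _ E2) _ (Hf (j - S d)%nat)) as s2.
      rewrite <- IH in s2.
      rewrite (surjective_pairing (f (i - S d)%nat)), (surjective_pairing (f (i - d)%nat)) in s1.
      rewrite (surjective_pairing (f (j - S d)%nat)), (surjective_pairing (f (i - d)%nat)) in s2.
      destruct (step_back a p q n0 md n _ _ _ _ _ _ (Hfi _) (Hfi _) s1 s2) as [e1 e2].
      rewrite (surjective_pairing (f (i - S d)%nat)), (surjective_pairing (f (j - S d)%nat)), e1, e2.
      reflexivity. }
  specialize (Hback i (le_n i)). rewrite Nat.sub_diag in Hback.
  assert (Hf0 : f 0%nat = s) by (exact (Hf 0%nat)).
  rewrite Hf0 in Hback.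
  assert (HP : exists m, (1 <= m)%nat /\ reach a n m s s).
  { exists (j - i)%nat. split; [lia|]. rewrite Hback at 2. apply Hf. }
  destruct (least_nat _ HP) as [m [[hm1 hm2] hmin]].
  exists m. split; auto. split; auto. intros k hk1 hk2 hr. apply (hmin k hk2). auto.
Qed.

Lemma hwall_equiv a p q n0 md n (y v : pt) : Cond a p q n0 md -> OL a p q n0 md y v -> (n0 <= n)%nat ->
  (on_hwall a (S n) y <-> on_hwall a n y).
Proof.
  intros HC HO Hn. assert (Ha1 : (1 <= a)%nat) by (destruct HC; lia).
  split; (intros [h|[k [i [j [[h1 [h2 h3]] [h4 h5]]]]]]; [left; exact h|]).
  - destruct (le_lt_dec k n) as [hk|hk].
    + right. exists k, i, j. repeat split; auto; tauto.
    + exfalso. apply (avoid a p q n0 md k i j y v HC HO ltac:(lia)); auto.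
      pose proof (side_pos a k Ha1). destruct h4 as [e|e]; rewrite e; lra.
  - right. exists k, i, j. repeat split; auto; try lia; tauto.
Qed.

Lemma vwall_equiv a p q n0 md n (y v : pt) : Cond a p q n0 md -> OL a p q n0 md y v -> (n0 <= n)%nat ->
  (on_vwall a (S n) y <-> on_vwall a n y).
Proof.
  intros HC HO Hn. assert (Ha1 : (1 <= a)%nat) by (destruct HC; lia).
  split; (intros [h|[k [i [j [[h1 [h2 h3]] [h4 h5]]]]]]; [left; exact h|]).
  - destruct (le_lt_dec k n) as [hk|hk].
    + right. exists k, i, j. repeat split; auto; tauto.
    + exfalso. apply (avoid a p q n0 md k i j y v HC HO ltac:(lia)); auto.
      pose proof (side_pos a k Ha1). destruct h4 as [e|e]; rewrite e; lra.
  - right. exists k, i, j. repeat split; auto; try lia; tauto.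
Qed.

Lemma step_equiv a p q n0 md n (x v : pt) s' : Cond a p q n0 md -> OL a p q n0 md x v -> (n0 <= n)%nat ->
  (step a (S n) (x, v) s' <-> step a n (x, v) s').
Proof.
  intros HC HO Hn. destruct s' as [y w]. simpl.
  assert (Hh : forall t, hits a (S n) x v t <-> hits a n x v t).
  { intro t. pose proof (OL_move a p q n0 md x v t HO) as HO'. unfold hits, hhit, vhit.
    rewrite (hwall_equiv a p q n0 md n _ v HC HO' Hn), (vwall_equiv a p q n0 md n _ v HC HO' Hn).
    tauto. }
  split; intros [t [h1 [h2 [h3 [h4 [h5 [h6 [h7 [h8 h9]]]]]]]]];
    pose proof (OL_move a p q n0 md x v t HO) as HO'; rewrite <- h4 in HO';
    pose proof (hwall_equiv a p q n0 md n _ v HC HO' Hn) as EH;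
    pose proof (vwall_equiv a p q n0 md n _ v HC HO' Hn) as EV;
    exists t; unfold hhit, vhit in *; rewrite ?EH, ?EV in *; rewrite ?Hh in *.
  - repeat split; auto.
    all: try (intros t' ht'; first [rewrite Hh; now auto | rewrite <- Hh; now auto]).
    all: try (intro hc; apply (pcorner_false a p q n0 md n y v HC HO' hc)).
  - repeat split; auto.
    all: try (intros t' ht'; first [rewrite Hh; now auto | rewrite <- Hh; now auto]).
    all: try (intro hc; apply (pcorner_false a p q n0 md (S n) y v HC HO' hc)).
Qed.

Lemma reach_equiv a p q n0 md n s : Cond a p q n0 md -> Inv a p q n0 md n (fst s) (snd s) ->
  (n0 <= n)%nat -> forall k s', reach a (S n) k s s' <-> reach a n k s s'.
Proof.
  intros HC HI Hn k. induction k as [|k IH]; intro s'; simpl; [tauto|].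
  split; intros [s1 [r1 t1]]; exists s1.
  - apply IH in r1. split; auto.
    pose proof (reach_inv a p q n0 md n k s s1 HC HI r1) as hi.
    rewrite (surjective_pairing s1) in t1 |- *.
    apply (step_equiv a p q n0 md n _ _ s' HC (proj1 hi) Hn). exact t1.
  - pose proof (reach_inv a p q n0 md n k s s1 HC HI r1) as hi.
    split; [apply IH; auto|].
    rewrite (surjective_pairing s1) in t1 |- *.
    apply (step_equiv a p q n0 md n _ _ s' HC (proj1 hi) Hn). exact t1.
Qed.

Lemma path_eq a p q n0 md n s : Cond a p q n0 md -> Inv a p q n0 md n (fst s) (snd s) ->
  (n0 <= n)%nat -> path a (S n) s = path a n s.
Proof.
  intros HC HI Hn. apply functional_extensionality. intro z.
  apply propositional_extensionality. unfold path.
  split; intros [k [s1 [s2 [r [t sg]]]]]; exists k, s1, s2.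
  - pose proof (proj1 (reach_equiv a p q n0 md n s HC HI Hn k s1) r) as r'.
    pose proof (reach_inv a p q n0 md n k s s1 HC HI r') as hi.
    rewrite (surjective_pairing s1) in t.
    apply (step_equiv a p q n0 md n _ _ s2 HC (proj1 hi) Hn) in t.
    rewrite <- surjective_pairing in t. auto.
  - pose proof (reach_inv a p q n0 md n k s s1 HC HI r) as hi.
    rewrite (surjective_pairing s1) in t.
    apply (step_equiv a p q n0 md n _ _ s2 HC (proj1 hi) Hn) in t.
    rewrite <- surjective_pairing in t.
    split; [apply (proj2 (reach_equiv a p q n0 md n s HC HI Hn k s1)); auto|]. auto.
Qed.

Lemma good_seq a p q n0 md s : Cond a p q n0 md ->
  (forall n, Inv a p q n0 md n (fst s) (snd s)) -> good_sequence a s.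
Proof.
  intros HC HI. split.
  - intro n. apply (periodic_of a p q n0 md n s HC (HI n)).
  - exists n0. split.
    + intros n hn. apply (path_eq a p q n0 md n s HC (HI n) hn).
    + exists n0, (fun _ => fst s), (snd s). split.
      { intro e. destruct (OL_dir _ _ _ _ _ _ _ (proj1 (HI 0%nat))) as [h _]. rewrite e in h. simpl in h. lra. }
      split.
      { intros n _. destruct (HI n) as [_ [_ [_ [_ [_ [_ [_ [_ [h|h]]]]]]]]].
        - left. exact (proj2 h).
        - right. exact (proj2 h). }
      split.
      { intros n m _ _. exists 0. split.
        - unfold move. destruct (fst s) as [u1 u2]. cbn [fst snd]. f_equal; ring.
        - intros z [l [_ hz]] _. rewrite hz. destruct (fst s) as [u1 u2]. cbn [fst snd]. f_equal; ring. }
      split.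
      { intros n _. rewrite <- surjective_pairing. apply (periodic_of a p q n0 md n s HC (HI n)). }
      exists n0. split; [lia|]. split.
      * intros n hn. rewrite <- surjective_pairing. apply (path_eq a p q n0 md n s HC (HI n)). lia.
      * rewrite <- surjective_pairing. reflexivity.
Qed.

Lemma inv_A a p q n : Cond a p q 0 false -> Inv a p q 0 false n (0, 0) (1, slope p q).
Proof.
  intros HC. assert (Hq : (1 <= q)%nat) by (destruct HC as [_ [_ [h _]]]; exact h).
  pose proof (al_pos p q Hq).
  split; [|split; [|split; [|split; [|split; [|split; [|split; [|split]]]]]]]; cbn [fst snd].
  - exists 1%Z, 1%Z, 0%Z. repeat split; auto.
    + f_equal; simpl; ring.
    + unfold Lval. cbn [fst snd]. ring.
  - lra.
  - lra.
  - intros; lra.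
  - intros; lra.
  - intros; lra.
  - intros; lra.
  - exists 0%Z, 0%Z. split; simpl; ring.
  - right. split; [cbn; lra|]. left. cbn [fst snd]. split; [auto|lra].
Qed.

Lemma inv_B a p q n0 r n : Cond a p q n0 true -> Nat.odd r = true -> (0 < r)%nat ->
  (r < 2 * a ^ n0)%nat ->
  Inv a p q n0 true n (INR r / (2 * INR a ^ n0), 0) (1, slope p q).
Proof.
  intros HC Hr Hr0 Hr1.
  destruct HC as [Ha3 [Hao [Hq [Hpq [Hp1 [Hq1 Hp]]]]]].
  assert (HA : INR a ^ n0 > 0) by (apply pow_lt, lt_0_INR; lia).
  assert (Hal : 0 < slope p q).
  { unfold slope. apply Rdiv_lt_0_compat; apply lt_0_INR; lia. }
  assert (HrR : 0 < INR r) by (apply lt_0_INR; lia).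
  assert (Hr1R : INR r < 2 * INR a ^ n0).
  { rewrite <- pow_INR. replace 2 with (INR 2) by (simpl; ring). rewrite <- mult_INR.
    apply lt_INR. exact Hr1. }
  assert (Hx : 0 < INR r / (2 * INR a ^ n0) < 1).
  { split; [apply Rdiv_lt_0_compat; lra|].
    apply (Rmult_lt_reg_r (2 * INR a ^ n0)); [lra|]. field_simplify; lra. }
  split; [|split; [|split; [|split; [|split; [|split; [|split; [|split]]]]]]]; cbn [fst snd].
  - exists 1%Z, 1%Z, (- (Z.of_nat p * Z.of_nat r))%Z. repeat split; auto.
    + f_equal; simpl; ring.
    + rewrite Z.odd_opp, Z.odd_mul, !zodd_nat, Hp1, Hr. reflexivity.
    + unfold Lval, slope. cbn [fst snd]. rewrite opp_IZR, mult_IZR, <- !INR_IZR_INZ.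
      field. split; [lra|]. apply not_0_INR; lia.
  - lra.
  - lra.
  - intros; lra.
  - intros; lra.
  - intros; lra.
  - intros; lra.
  - exists (Z.of_nat (Nat.max p 1 * q * r)), 0%Z. split; [|simpl; ring].
    rewrite <- INR_IZR_INZ, !mult_INR. unfold Mr. field. lra.
  - left. split; [cbn; lra|]. left. cbn [fst snd]. split; [auto|lra].
Qed.

Theorem theorem4p2 :
  forall (a : nat), (3 <= a)%nat -> Nat.odd a = true ->
  forall al : R, inA a al \/ inB a al ->
    (inA (a - 2) al -> good_sequence a ((0, 0), (1, al))) /\
    (inB a al -> forall n0 r : nat, (1 <= n0)%nat -> Nat.odd r = true -> (0 < r)%nat ->
       (r < 2 * a ^ n0)%nat ->
       good_sequence a ((INR r / (2 * INR a ^ n0), 0), (1, al))).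
Proof.
  intros a Ha Hao alpha _. split.
  - intros HA. unfold inA in HA.
    assert (exists p q, alpha = slope p q /\ Cond a p q 0 false) as [p [q [Hal HC]]].
    { destruct (Nat.eqb (a - 2) 1) eqn:E.
      - exists 0%nat, 1%nat. split.
        + rewrite HA. unfold slope. simpl. field.
        + apply Nat.eqb_eq in E. repeat split; auto; lia.
      - destruct HA as [p [q [h1 [h2 [h3 [h4 h5]]]]]]. exists p, q. split; [exact h5|].
        repeat split; auto; lia. }
    subst alpha. apply (good_seq a p q 0 false). exact HC.
    intro n. apply inv_A. exact HC.
  - intros HB n0 r Hn0 Hr Hr0 Hr1.
    destruct HB as [p [q [h1 [h2 [h3 [h4 [h5 [h6 [h7 h8]]]]]]]]].
    assert (HC : Cond a p q n0 true) by (repeat split; auto; lia).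
    subst alpha. apply (good_seq a p q n0 true). exact HC.
    intro n. apply (inv_B a p q n0 r n HC Hr Hr0 Hr1).
Qed.
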